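(* Let $\gamma:[0,l]\times[0,w)\to E_1^4$, $(s,t)\mapsto\gamma(s,t)$, be a smooth inextensible one-parameter family of partially null curves in $E_1^4$ parametrized by arclength ($\|\partial\gamma/\partial s\|\equiv1$), with Frenet frame $\{T,N,B_1,B_2\}$, curvatures $k_1,k_2$ (and $k_3\equiv0$), and write $$\frac{\partial\gamma}{\partial t}=\beta_1T+\beta_2N+\beta_3B_1+\beta_4B_2$$ with smooth scalar functions $\beta_i$. Put $\psi_1=\langle\frac{\partial N}{\partial t},B_1\rangle$ and $\psi_2=\langle\frac{\partial N}{\partial t},B_2\rangle$. Then, at points where $\psi_1\neq0$, $$k_1=\frac{1}{\psi_1}\frac{\partial^2\beta_4}{\partial s^2},$$ and $$\frac{\partial^2\beta_3}{\partial s^2}+\frac{\partial(\beta_2k_2)}{\partial s}+\frac{\partial\beta_2}{\partial s}k_2+\beta_1k_1k_2-\beta_4k_2^2-\psi_2k_1=0.$$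
   Context: $E_1^4$ is $\mathbb{R}^4$ with the Lorentzian metric $\langle x,y\rangle=-x_1y_1+x_2y_2+x_3y_3+x_4y_4$ and $\|x\|=\sqrt{|\langle x,x\rangle|}$. A partially null curve is a spacelike curve whose first binormal is a null vector. For such a curve parametrized by arclength $s$, its Frenet frame $\{T,N,B_1,B_2\}$ ($T=\partial\gamma/\partial s$) satisfies $\langle T,T\rangle=\langle N,N\rangle=1$, $\langle B_1,B_1\rangle=\langle B_2,B_2\rangle=0$, $\langle B_1,B_2\rangle=1$, all other inner products zero, and the Frenet equations $T'=k_1N$, $N'=-k_1T+k_2B_1$, $B_1'=k_3B_1$, $B_2'=-k_2N-k_3B_2$, with $k_3\equiv0$. In the family, each $s\mapsto\gamma(s,t)$ is such a curve and frame and curvatures are smooth in $(s,t)$. The flow is inextensible if $\frac{\partial}{\partial t}\|\partial\gamma/\partial u\|=0$. *)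

(* Defs.v *)
From Stdlib Require Import Reals Lra.
From Coquelicot Require Import Coquelicot.
Open Scope R_scope.

Record V4 := mkV4 { x1 : R ; x2 : R ; x3 : R ; x4 : R }.

Definition lor (x y : V4) : R :=
  - x1 x * x1 y + x2 x * x2 y + x3 x * x3 y + x4 x * x4 y.
Definition lnorm (x : V4) : R := sqrt (Rabs (lor x x)).

Definition lin4 (a b c d : R) (X Y Z W : V4) : V4 :=
  mkV4 (a * x1 X + b * x1 Y + c * x1 Z + d * x1 W)
       (a * x2 X + b * x2 Y + c * x2 Z + d * x2 W)
       (a * x3 X + b * x3 Y + c * x3 Z + d * x3 W)
       (a * x4 X + b * x4 Y + c * x4 Z + d * x4 W).

Definition vscale (a : R) (X : V4) : V4 :=
  mkV4 (a * x1 X) (a * x2 X) (a * x3 X) (a * x4 X).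
Definition vzero : V4 := mkV4 0 0 0 0.

Definition d_s (f : R -> R -> R) : R -> R -> R :=
  fun s t => Derive (fun u => f u t) s.
Definition d_t (f : R -> R -> R) : R -> R -> R :=
  fun s t => Derive (fun v => f s v) t.

Definition vd_s (F : R -> R -> V4) : R -> R -> V4 :=
  fun s t => mkV4 (d_s (fun a b => x1 (F a b)) s t) (d_s (fun a b => x2 (F a b)) s t)
                  (d_s (fun a b => x3 (F a b)) s t) (d_s (fun a b => x4 (F a b)) s t).
Definition vd_t (F : R -> R -> V4) : R -> R -> V4 :=
  fun s t => mkV4 (d_t (fun a b => x1 (F a b)) s t) (d_t (fun a b => x2 (F a b)) s t)
                  (d_t (fun a b => x3 (F a b)) s t) (d_t (fun a b => x4 (F a b)) s t).

Definition pd (b : bool) (f : R -> R -> R) : R -> R -> R :=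
  if b then d_s f else d_t f.
Definition pds (l : list bool) (f : R -> R -> R) : R -> R -> R :=
  List.fold_right pd f l.

(* f is C^infinity on a neighbourhood of (s,t): every iterated partial
   derivative exists (in both directions) and is jointly continuous near (s,t). *)
Definition smooth_at (f : R -> R -> R) (s t : R) : Prop :=
  forall l : list bool,
    locally ((s, t) : R * R) (fun q : R * R =>
      ex_derive (fun u => pds l f u (snd q)) (fst q) /\
      ex_derive (fun v => pds l f (fst q) v) (snd q) /\
      continuous (fun p : R * R => pds l f (fst p) (snd p)) q).

Definition vsmooth_at (F : R -> R -> V4) (s t : R) : Prop :=
  smooth_at (fun a b => x1 (F a b)) s t /\ smooth_at (fun a b => x2 (F a b)) s t /\
  smooth_at (fun a b => x3 (F a b)) s t /\ smooth_at (fun a b => x4 (F a b)) s t.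

Definition rect (l w s t : R) : Prop := 0 <= s <= l /\ 0 <= t < w.

(* Main.v *)
Require Import Defs.
From Stdlib Require Import Reals Lra.
From Coquelicot Require Import Coquelicot.
Open Scope R_scope.

Lemma derive_agree (f g : R -> R) x a b : a < b -> a <= x <= b ->
  ex_derive f x -> ex_derive g x -> (forall y, a <= y <= b -> f y = g y) ->
  Derive f x = Derive g x.
Proof.
  intros Hab Hx Hf Hg Heq.
  assert (Hd : is_derive (fun y => f y - g y) x (Derive f x - Derive g x)).
  { apply (is_derive_minus f g); apply Derive_correct; auto. }
  apply is_derive_Reals in Hd.
  set (D := Derive f x - Derive g x) in *.
  destruct (Req_dec D 0) as [E|NE]; [unfold D in E; lra|exfalso].
  assert (He : 0 < Rabs D / 2) by (generalize (Rabs_pos_lt D NE); lra).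
  destruct (Hd _ He) as [del Hdel].
  assert (Hdp := cond_pos del).
  assert (Hz : forall hh, hh <> 0 -> Rabs hh < del -> a <= x + hh <= b -> False).
  { intros hh H1 H2 H3. specialize (Hdel hh H1 H2).
    rewrite (Heq (x+hh) H3), (Heq x Hx) in Hdel.
    replace ((g (x + hh) - g (x + hh) - (g x - g x)) / hh - D) with (- D) in Hdel
      by (field; auto).
    rewrite Rabs_Ropp in Hdel. generalize (Rabs_pos_lt D NE); lra. }
  destruct (Rlt_or_le x b) as [Hxb|Hxb].
  - apply (Hz (Rmin (del/2) (b - x))).
    + generalize (Rmin_glb_lt (del/2) (b-x) 0); unfold Rmin; destruct Rle_dec; lra.
    + rewrite Rabs_pos_eq; unfold Rmin; destruct Rle_dec; lra.
    + unfold Rmin; destruct Rle_dec; lra.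
  - apply (Hz (- Rmin (del/2) (x - a))).
    + unfold Rmin; destruct Rle_dec; lra.
    + rewrite Rabs_Ropp, Rabs_pos_eq; unfold Rmin; destruct Rle_dec; lra.
    + unfold Rmin; destruct Rle_dec; lra.
Qed.

Lemma sm_pt f s t l : smooth_at f s t ->
  ex_derive (fun u => pds l f u t) s /\ ex_derive (fun v => pds l f s v) t.
Proof. intros H. destruct (locally_singleton _ _ (H l)) as [A [B _]]. simpl in *; auto. Qed.

Lemma schw f s t : smooth_at f s t -> d_s (d_t f) s t = d_t (d_s f) s t.
Proof.
  intros H. unfold d_s, d_t. apply Schwarz.
  - apply locally_2d_locally.
    generalize (filter_and _ _ (H List.nil) (filter_and _ _ (H (List.cons false List.nil)) (H (List.cons true List.nil)))).
    apply filter_imp. intros q [[A [B _]] [[C _] [_ [D _]]]]. simpl in *. auto.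
  - apply continuity_2d_pt_filterlim.
    destruct (locally_singleton _ _ (H (List.cons true (List.cons false List.nil)))) as [_ [_ C]]. exact C.
  - apply continuity_2d_pt_filterlim.
    destruct (locally_singleton _ _ (H (List.cons false (List.cons true List.nil)))) as [_ [_ C]]. exact C.
Qed.

Definition vex (f : R -> V4) x := ex_derive (fun u => x1 (f u)) x /\
  ex_derive (fun u => x2 (f u)) x /\ ex_derive (fun u => x3 (f u)) x /\
  ex_derive (fun u => x4 (f u)) x.
Definition vD (f : R -> V4) x := mkV4 (Derive (fun u => x1 (f u)) x)
  (Derive (fun u => x2 (f u)) x) (Derive (fun u => x3 (f u)) x) (Derive (fun u => x4 (f u)) x).

Lemma Dscal (a1 a2 a3 a4 b1 b2 b3 b4 : R -> R) x :
  ex_derive a1 x -> ex_derive a2 x -> ex_derive a3 x -> ex_derive a4 x ->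
  ex_derive b1 x -> ex_derive b2 x -> ex_derive b3 x -> ex_derive b4 x ->
  is_derive (fun u => - a1 u * b1 u + a2 u * b2 u + a3 u * b3 u + a4 u * b4 u) x
   ((- Derive a1 x * b1 x + Derive a2 x * b2 x + Derive a3 x * b3 x + Derive a4 x * b4 x)
   + (- a1 x * Derive b1 x + a2 x * Derive b2 x + a3 x * Derive b3 x + a4 x * Derive b4 x)).
Proof. intros. auto_derive; [tauto | ]. change (fun y => a1 y) with a1; change (fun y => a2 y) with a2; change (fun y => a3 y) with a3; change (fun y => a4 y) with a4; change (fun y => b1 y) with b1; change (fun y => b2 y) with b2; change (fun y => b3 y) with b3; change (fun y => b4 y) with b4. ring. Qed.

Lemma Derive_lor f g x : vex f x -> vex g x ->
  Derive (fun u => lor (f u) (g u)) x = lor (vD f x) (g x) + lor (f x) (vD g x).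
Proof.
  intros (A1&A2&A3&A4) (B1&B2&B3&B4). apply is_derive_unique. unfold lor, vD; simpl.
  apply (Dscal (fun u => x1 (f u)) (fun u => x2 (f u)) (fun u => x3 (f u)) (fun u => x4 (f u))
    (fun u => x1 (g u)) (fun u => x2 (g u)) (fun u => x3 (g u)) (fun u => x4 (g u))); auto.
Qed.

Lemma ex_lor f g x : vex f x -> vex g x -> ex_derive (fun u => lor (f u) (g u)) x.
Proof.
  intros A B. eexists. unfold lor. destruct A as (A1&A2&A3&A4), B as (B1&B2&B3&B4).
  apply (Dscal (fun u => x1 (f u)) (fun u => x2 (f u)) (fun u => x3 (f u)) (fun u => x4 (f u))
    (fun u => x1 (g u)) (fun u => x2 (g u)) (fun u => x3 (g u)) (fun u => x4 (g u))); auto.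
Qed.

Lemma lor_lin4 a b c d X Y Z W U :
  lor (lin4 a b c d X Y Z W) U = a * lor X U + b * lor Y U + c * lor Z U + d * lor W U.
Proof. unfold lor, lin4; simpl; ring. Qed.
Lemma lor_sym X Y : lor X Y = lor Y X.
Proof. unfold lor; ring. Qed.
Lemma lor_scale a X Y : lor X (vscale a Y) = a * lor X Y.
Proof. unfold lor, vscale; simpl; ring. Qed.
Lemma lor_zero X : lor X vzero = 0.
Proof. unfold lor, vzero; simpl; ring. Qed.

Lemma S1c (Ti Gi : R->R->R) s t c : t < c -> smooth_at Ti s t -> smooth_at Gi s t ->
  (forall v, t <= v <= c -> Ti s v = d_s Gi s v) -> d_t Ti s t = d_s (d_t Gi) s t.
Proof.
  intros Hc HTi HGi He. rewrite schw by auto. unfold d_t at 1 2.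
  apply derive_agree with t c; try lra.
  - exact (proj2 (sm_pt Ti s t List.nil HTi)).
  - exact (proj2 (sm_pt Gi s t (List.cons true List.nil) HGi)).
  - exact He.
Qed.

Lemma As (f g : R -> R -> R) s t l : 0 < l -> 0 <= s <= l ->
  ex_derive (fun u => f u t) s -> ex_derive (fun u => g u t) s ->
  (forall u, 0 <= u <= l -> f u t = g u t) -> d_s f s t = d_s g s t.
Proof. intros. unfold d_s. apply derive_agree with 0 l; auto. Qed.

Lemma At (f g : R -> R -> R) s t c : t < c ->
  ex_derive (fun v => f s v) t -> ex_derive (fun v => g s v) t ->
  (forall v, t <= v <= c -> f s v = g s v) -> d_t f s t = d_t g s t.
Proof. intros. unfold d_t. apply derive_agree with t c; auto; lra. Qed.

Lemma vex_s (F : R -> R -> V4) s t : vsmooth_at F s t -> vex (fun u => F u t) s.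
Proof. intros (A&B&C&D). repeat split;
  [exact (proj1 (sm_pt _ _ _ List.nil A)) | exact (proj1 (sm_pt _ _ _ List.nil B)) |
   exact (proj1 (sm_pt _ _ _ List.nil C)) | exact (proj1 (sm_pt _ _ _ List.nil D))]. Qed.

Lemma vex_ts (F : R -> R -> V4) s t : vsmooth_at F s t -> vex (fun u => vd_t F u t) s.
Proof. intros (A&B&C&D). repeat split;
  [exact (proj1 (sm_pt _ _ _ (List.cons false List.nil) A)) | exact (proj1 (sm_pt _ _ _ (List.cons false List.nil) B)) |
   exact (proj1 (sm_pt _ _ _ (List.cons false List.nil) C)) | exact (proj1 (sm_pt _ _ _ (List.cons false List.nil) D))]. Qed.

Lemma ds_lor F G s t : vex (fun u => F u t) s -> vex (fun u => G u t) s ->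
  d_s (fun a b => lor (F a b) (G a b)) s t = lor (vd_s F s t) (G s t) + lor (F s t) (vd_s G s t).
Proof. intros A B. exact (Derive_lor _ _ s A B). Qed.

Lemma S4c (Ti k Ni : R->R->R) s t c : t < c -> smooth_at Ti s t -> smooth_at k s t ->
  smooth_at Ni s t -> (forall v, t <= v <= c -> d_s Ti s v = k s v * Ni s v) ->
  d_s (d_t Ti) s t = d_t k s t * Ni s t + k s t * d_t Ni s t.
Proof.
  intros Hc HTi Hk HN He. rewrite schw by auto. unfold d_t at 1.
  transitivity (Derive (fun v => k s v * Ni s v) t).
  - apply derive_agree with t c; try lra.
    + exact (proj2 (sm_pt Ti s t (List.cons true List.nil) HTi)).
    + apply ex_derive_mult; [exact (proj2 (sm_pt k s t List.nil Hk)) | exact (proj2 (sm_pt Ni s t List.nil HN))].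
    + exact He.
  - apply Derive_mult; [exact (proj2 (sm_pt k s t List.nil Hk)) | exact (proj2 (sm_pt Ni s t List.nil HN))].
Qed.

Lemma lor_zero_l X : lor vzero X = 0.
Proof. unfold lor, vzero; simpl; ring. Qed.

Theorem corollary3p7
  (l w : R) (hl : 0 < l) (hw : 0 < w)
  (gamma T N B1 B2 : R -> R -> V4)
  (k1 k2 beta1 beta2 beta3 beta4 : R -> R -> R)
  (* smoothness of the family, the frame, the curvatures and the beta_i *)
  (Hsm : forall s t, rect l w s t ->
     vsmooth_at gamma s t /\ vsmooth_at T s t /\ vsmooth_at N s t /\
     vsmooth_at B1 s t /\ vsmooth_at B2 s t /\
     smooth_at k1 s t /\ smooth_at k2 s t /\
     smooth_at beta1 s t /\ smooth_at beta2 s t /\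
     smooth_at beta3 s t /\ smooth_at beta4 s t)
  (* T = d gamma / ds *)
  (HT : forall s t, rect l w s t -> vd_s gamma s t = T s t)
  (* partially null Frenet frame *)
  (HTT : forall s t, rect l w s t -> lor (T s t) (T s t) = 1)
  (HNN : forall s t, rect l w s t -> lor (N s t) (N s t) = 1)
  (HB1B1 : forall s t, rect l w s t -> lor (B1 s t) (B1 s t) = 0)
  (HB2B2 : forall s t, rect l w s t -> lor (B2 s t) (B2 s t) = 0)
  (HB1B2 : forall s t, rect l w s t -> lor (B1 s t) (B2 s t) = 1)
  (HTN : forall s t, rect l w s t -> lor (T s t) (N s t) = 0)
  (HTB1 : forall s t, rect l w s t -> lor (T s t) (B1 s t) = 0)
  (HTB2 : forall s t, rect l w s t -> lor (T s t) (B2 s t) = 0)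
  (HNB1 : forall s t, rect l w s t -> lor (N s t) (B1 s t) = 0)
  (HNB2 : forall s t, rect l w s t -> lor (N s t) (B2 s t) = 0)
  (* Frenet equations, with k3 = 0 *)
  (HFT : forall s t, rect l w s t -> vd_s T s t = vscale (k1 s t) (N s t))
  (HFN : forall s t, rect l w s t ->
     vd_s N s t = lin4 (- k1 s t) 0 (k2 s t) 0 (T s t) (N s t) (B1 s t) (B2 s t))
  (HFB1 : forall s t, rect l w s t -> vd_s B1 s t = vzero)
  (HFB2 : forall s t, rect l w s t -> vd_s B2 s t = vscale (- k2 s t) (N s t))
  (* inextensibility *)
  (Hinext : forall s t, rect l w s t ->
     Derive (fun v => lnorm (vd_s gamma s v)) t = 0)
  (* decomposition of the variation vector field *)
  (Hvar : forall s t, rect l w s t ->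
     vd_t gamma s t =
     lin4 (beta1 s t) (beta2 s t) (beta3 s t) (beta4 s t) (T s t) (N s t) (B1 s t) (B2 s t)) :
  forall s t, rect l w s t ->
    let psi1 := lor (vd_t N s t) (B1 s t) in
    let psi2 := lor (vd_t N s t) (B2 s t) in
    psi1 <> 0 ->
    k1 s t = / psi1 * d_s (d_s beta4) s t /\
    d_s (d_s beta3) s t + d_s (fun a b => beta2 a b * k2 a b) s t
      + d_s beta2 s t * k2 s t + beta1 s t * k1 s t * k2 s t
      - beta4 s t * (k2 s t) ^ 2 - psi2 * k1 s t = 0.
Proof.
  intros s t Hr psi1 psi2 Hpsi.
  destruct Hr as [Hs Ht].
  set (c := (t + w) / 2).
  assert (Hc : t < c) by (unfold c; lra).
  assert (Hrs : forall u, 0 <= u <= l -> rect l w u t) by (intros; split; lra).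
  assert (Hrt : forall v, t <= v <= c -> rect l w s v) by (intros; unfold c in *; split; lra).
  assert (Hr0 : rect l w s t) by (split; lra).
  assert (S1 : forall u, 0 <= u <= l -> vd_t T u t = vd_s (vd_t gamma) u t).
  { intros u Hu. destruct (Hsm u t (Hrs u Hu)) as (Hg&HTs&_).
    destruct Hg as (G1&G2&G3&G4), HTs as (T1&T2&T3&T4).
    assert (Hru : forall v, t <= v <= c -> rect l w u v) by (intros; unfold c in *; split; lra).
    unfold vd_s, vd_t; cbn [x1 x2 x3 x4]; f_equal; apply S1c with c; auto;
      intros v Hv; rewrite <- (HT u v (Hru v Hv)); reflexivity. }
  assert (Hval : forall u v, rect l w u v ->
     lor (vd_t gamma u v) (T u v) = beta1 u v /\ lor (vd_t gamma u v) (N u v) = beta2 u v /\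
     lor (vd_t gamma u v) (B1 u v) = beta4 u v /\ lor (vd_t gamma u v) (B2 u v) = beta3 u v).
  { intros u v H. rewrite (Hvar u v H), !lor_lin4.
    rewrite (lor_sym (N u v) (T u v)), (lor_sym (B1 u v) (T u v)), (lor_sym (B2 u v) (T u v)),
      (lor_sym (B1 u v) (N u v)), (lor_sym (B2 u v) (N u v)), (lor_sym (B2 u v) (B1 u v)).
    rewrite HTT, HNN, HB1B1, HB2B2, HB1B2, HTN, HTB1, HTB2, HNB1, HNB2 by exact H.
    repeat split; ring. }
  assert (S2 : forall u, 0 <= u <= l -> lor (vd_t T u t) (B1 u t) = d_s beta4 u t).
  { intros u Hu. rewrite (S1 u Hu).
    destruct (Hsm u t (Hrs u Hu)) as (Hg&_&_&HB1s&_&_&_&_&_&_&Hb4).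
    assert (E := ds_lor (vd_t gamma) B1 u t (vex_ts _ _ _ Hg) (vex_s _ _ _ HB1s)).
    rewrite (HFB1 u t (Hrs u Hu)), lor_zero in E.
    rewrite (As _ beta4 u t l) in E; auto; try lra.
    - apply ex_lor; [apply vex_ts | apply vex_s]; auto.
    - exact (proj1 (sm_pt _ _ _ List.nil Hb4)).
    - intros u' Hu'. apply (Hval u' t (Hrs u' Hu')). }
  assert (S2' : forall u, 0 <= u <= l ->
      lor (vd_t T u t) (B2 u t) = d_s beta3 u t + beta2 u t * k2 u t).
  { intros u Hu. rewrite (S1 u Hu).
    destruct (Hsm u t (Hrs u Hu)) as (Hg&_&_&_&HB2s&_&_&_&_&Hb3&_).
    assert (E := ds_lor (vd_t gamma) B2 u t (vex_ts _ _ _ Hg) (vex_s _ _ _ HB2s)).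
    rewrite (HFB2 u t (Hrs u Hu)), lor_scale in E.
    rewrite (proj1 (proj2 (Hval u t (Hrs u Hu)))) in E.
    rewrite (As _ beta3 u t l) in E; auto; try lra.
    - apply ex_lor; [apply vex_ts | apply vex_s]; auto.
    - exact (proj1 (sm_pt _ _ _ List.nil Hb3)).
    - intros u' Hu'. apply (Hval u' t (Hrs u' Hu')). }
  assert (S2N : lor (vd_t T s t) (N s t) = d_s beta2 s t + k1 s t * beta1 s t - k2 s t * beta4 s t).
  { rewrite (S1 s Hs).
    destruct (Hsm s t Hr0) as (Hg&_&HNs&_&_&_&_&_&Hb2&_&_).
    assert (E := ds_lor (vd_t gamma) N s t (vex_ts _ _ _ Hg) (vex_s _ _ _ HNs)).
    rewrite (HFN s t Hr0), (lor_sym (vd_t gamma s t)), lor_lin4 in E.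
    rewrite !(lor_sym _ (vd_t gamma s t)) in E.
    destruct (Hval s t Hr0) as (V1&V2&V3&V4).
    rewrite V1, V2, V3, V4 in E.
    rewrite (As _ beta2 s t l) in E; auto; try lra.
    - apply ex_lor; [apply vex_ts | apply vex_s]; auto.
    - exact (proj1 (sm_pt _ _ _ List.nil Hb2)).
    - intros u' Hu'. apply (Hval u' t (Hrs u' Hu')). }
  destruct (Hsm s t Hr0) as (Hg&HTs&HNs&HB1s&HB2s&Hk1&Hk2&Hb1&Hb2&Hb3&Hb4).
  assert (V4E : vd_s (vd_t T) s t = lin4 (d_t k1 s t) (k1 s t) 0 0 (N s t) (vd_t N s t) vzero vzero).
  { destruct HTs as (T1&T2&T3&T4), HNs as (N1&N2&N3&N4).
    unfold vd_s, vd_t, lin4, vzero; cbn [x1 x2 x3 x4]; f_equal.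
    - etransitivity; [apply S4c with (c := c) (k := k1) (Ni := fun a b => x1 (N a b)); auto | ring].
      intros v Hv. generalize (f_equal x1 (HFT s v (Hrt v Hv))). cbn [x1 x2 x3 x4 vscale]. auto.
    - etransitivity; [apply S4c with (c := c) (k := k1) (Ni := fun a b => x2 (N a b)); auto | ring].
      intros v Hv. generalize (f_equal x2 (HFT s v (Hrt v Hv))). cbn [x1 x2 x3 x4 vscale]. auto.
    - etransitivity; [apply S4c with (c := c) (k := k1) (Ni := fun a b => x3 (N a b)); auto | ring].
      intros v Hv. generalize (f_equal x3 (HFT s v (Hrt v Hv))). cbn [x1 x2 x3 x4 vscale]. auto.
    - etransitivity; [apply S4c with (c := c) (k := k1) (Ni := fun a b => x4 (N a b)); auto | ring].
      intros v Hv. generalize (f_equal x4 (HFT s v (Hrt v Hv))). cbn [x1 x2 x3 x4 vscale]. auto.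
  }
  assert (E1 := ds_lor (vd_t T) B1 s t (vex_ts _ _ _ HTs) (vex_s _ _ _ HB1s)).
  rewrite (HFB1 s t Hr0), lor_zero, V4E, lor_lin4, !lor_zero_l, (HNB1 s t Hr0) in E1.
  rewrite (As _ (d_s beta4) s t l) in E1; auto; try lra.
  2: { apply ex_lor; [apply vex_ts | apply vex_s]; auto. }
  2: { exact (proj1 (sm_pt _ _ _ (List.cons true List.nil) Hb4)). }
  assert (E2 := ds_lor (vd_t T) B2 s t (vex_ts _ _ _ HTs) (vex_s _ _ _ HB2s)).
  rewrite (HFB2 s t Hr0), lor_scale, S2N, V4E, lor_lin4, !lor_zero_l, (HNB2 s t Hr0) in E2.
  rewrite (As _ (fun a b => d_s beta3 a b + beta2 a b * k2 a b) s t l) in E2; auto; try lra.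
  2: { apply ex_lor; [apply vex_ts | apply vex_s]; auto. }
  2: { apply (ex_derive_plus (fun u => d_s beta3 u t) (fun u => beta2 u t * k2 u t)); [exact (proj1 (sm_pt _ _ _ (List.cons true List.nil) Hb3)) |
       apply ex_derive_mult; [exact (proj1 (sm_pt _ _ _ List.nil Hb2)) | exact (proj1 (sm_pt _ _ _ List.nil Hk2))]]. }
  assert (E3 : d_s (fun a b => d_s beta3 a b + beta2 a b * k2 a b) s t =
     d_s (d_s beta3) s t + d_s (fun a b => beta2 a b * k2 a b) s t).
  { unfold d_s at 1. rewrite Derive_plus; [reflexivity | |].
    - exact (proj1 (sm_pt _ _ _ (List.cons true List.nil) Hb3)).
    - apply ex_derive_mult; [exact (proj1 (sm_pt _ _ _ List.nil Hb2)) | exact (proj1 (sm_pt _ _ _ List.nil Hk2))]. }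
  rewrite E3 in E2.
  fold psi1 in E1. fold psi2 in E2.
  split.
  - rewrite E1. field. exact Hpsi.
  - rewrite E2. ring.
Qed.
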